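(* Let $H$ be an $n\times n$ Hermitian matrix, $\hbar>0$, $\psi_0\in\mathbb C^n$ with $\|\psi_0\|=1$, $\rho_0=\psi_0\psi_0^\dagger$, and $\kappa(t)$ an arbitrary smooth curve of skew-Hermitian matrices. Let $U(t)\in\mathcal U(n)$ solve $\dot U=U\xi_H$ with $$\xi_H=-i\hbar^{-1}H_H+\{\mathbf 1-2\rho_0,\kappa\},\qquad H_H:=U^\dagger HU .$$ Then (i) $[\,i\hbar\xi_H-H_H,\rho_0]=0$; (ii) $\dot H_H=[H_H,\{\mathbf 1-2\rho_0,\kappa\}]$, and the energy is conserved: $\mathrm{Tr}(\rho_0\dot H_H)=0$; (iii) $\psi(t)=U(t)\psi_0$ satisfies $i\hbar\dot\psi=H\psi+\alpha\psi$ with the real function $\alpha=-2i\hbar\,\psi_0^\dagger\kappa\psi_0$.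
   Context: $\{A,B\}=AB+BA$, $[A,B]=AB-BA$, $\mathbf 1$ is the identity matrix. *)

(* Defs.v *)
From Stdlib Require Import Reals.
Open Scope R_scope.

Record C := mkC { Re : R ; Im : R }.
Definition C0 : C := mkC 0 0.
Definition C1 : C := mkC 1 0.
Definition Ci : C := mkC 0 1.
Definition RtoC (x : R) : C := mkC x 0.
Definition Cadd (z w : C) : C := mkC (Re z + Re w) (Im z + Im w).
Definition Copp (z : C) : C := mkC (- Re z) (- Im z).
Definition Csub (z w : C) : C := Cadd z (Copp w).
Definition Cmul (z w : C) : C :=
  mkC (Re z * Re w - Im z * Im w) (Re z * Im w + Im z * Re w).
Definition Cconj (z : C) : C := mkC (Re z) (- Im z).

Fixpoint csum (n : nat) (f : nat -> C) : C :=
  match n with O => C0 | S k => Cadd (csum k f) (f k) end.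

(* ---------- matrices and vectors (only indices < n are meaningful) ---------- *)
Definition Mat := nat -> nat -> C.
Definition Vec := nat -> C.

Definition mid : Mat := fun i j => if Nat.eqb i j then C1 else C0.
Definition mzero : Mat := fun _ _ => C0.
Definition madd (A B : Mat) : Mat := fun i j => Cadd (A i j) (B i j).
Definition msub (A B : Mat) : Mat := fun i j => Csub (A i j) (B i j).
Definition mscal (c : C) (A : Mat) : Mat := fun i j => Cmul c (A i j).
Definition mmul (n : nat) (A B : Mat) : Mat :=
  fun i j => csum n (fun k => Cmul (A i k) (B k j)).
Definition adj (A : Mat) : Mat := fun i j => Cconj (A j i).
Definition mtrace (n : nat) (A : Mat) : C := csum n (fun i => A i i).
Definition comm (n : nat) (A B : Mat) : Mat := msub (mmul n A B) (mmul n B A).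
Definition acomm (n : nat) (A B : Mat) : Mat := madd (mmul n A B) (mmul n B A).

Definition mvmul (n : nat) (A : Mat) (v : Vec) : Vec :=
  fun i => csum n (fun k => Cmul (A i k) (v k)).
Definition vdot (n : nat) (u v : Vec) : C := csum n (fun k => Cmul (Cconj (u k)) (v k)).
Definition outer (psi : Vec) : Mat := fun i j => Cmul (psi i) (Cconj (psi j)).

Definition meq (n : nat) (A B : Mat) : Prop :=
  forall i j, (i < n)%nat -> (j < n)%nat -> A i j = B i j.
Definition veq (n : nat) (u v : Vec) : Prop :=
  forall i, (i < n)%nat -> u i = v i.

Definition hermitian (n : nat) (A : Mat) : Prop := meq n (adj A) A.
Definition skew_hermitian (n : nat) (A : Mat) : Prop := meq n (adj A) (mscal (RtoC (-1)) A).
Definition unitary (n : nat) (U : Mat) : Prop :=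
  meq n (mmul n (adj U) U) mid /\ meq n (mmul n U (adj U)) mid.
Definition unit_vec (n : nat) (v : Vec) : Prop := vdot n v v = C1.

Definition cderiv (f : R -> C) (l : C) (t : R) : Prop :=
  derivable_pt_lim (fun s => Re (f s)) t (Re l) /\
  derivable_pt_lim (fun s => Im (f s)) t (Im l).
Definition mderiv (n : nat) (A : R -> Mat) (A' : Mat) (t : R) : Prop :=
  forall i j, (i < n)%nat -> (j < n)%nat -> cderiv (fun s => A s i j) (A' i j) t.
Definition vderiv (n : nat) (v : R -> Vec) (v' : Vec) (t : R) : Prop :=
  forall i, (i < n)%nat -> cderiv (fun s => v s i) (v' i) t.

Definition smoothR (f : R -> R) : Prop :=
  exists D : nat -> R -> R, (forall t, D O t = f t) /\
    (forall k t, derivable_pt_lim (D k) t (D (S k) t)).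
Definition smooth_curve (n : nat) (A : R -> Mat) : Prop :=
  forall i j, (i < n)%nat -> (j < n)%nat ->
    smoothR (fun t => Re (A t i j)) /\ smoothR (fun t => Im (A t i j)).

Definition rho0 (psi0 : Vec) : Mat := outer psi0.
Definition HH (n : nat) (H U : Mat) : Mat := mmul n (adj U) (mmul n H U).
Definition refl0 (psi0 : Vec) : Mat := msub mid (mscal (RtoC 2) (rho0 psi0)).
Definition xiH (n : nat) (hbar : R) (H : Mat) (psi0 : Vec) (kappa U : Mat) : Mat :=
  madd (mscal (Cmul (Copp Ci) (RtoC (/ hbar))) (HH n H U))
       (acomm n (refl0 psi0) kappa).
Definition alpha (n : nat) (hbar : R) (psi0 : Vec) (kappa : Mat) : C :=
  Cmul (Cmul (RtoC (-2)) (Cmul Ci (RtoC hbar))) (vdot n psi0 (mvmul n kappa psi0)).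

(* Main.v *)
Require Import Defs.
From Stdlib Require Import Reals Lra Setoid Morphisms FunctionalExtensionality Ring Lia.
Require Import Defs.
Open Scope R_scope.

Lemma C_ext (z w : C) : Re z = Re w -> Im z = Im w -> z = w.
Proof. destruct z, w; simpl; intros; subst; reflexivity. Qed.

Lemma Cring_theory : ring_theory C0 C1 Cadd Cmul Csub Copp (@eq C).
Proof. constructor; intros; apply C_ext; simpl; ring. Qed.
Add Ring Cring : Cring_theory.

Lemma Cconj_mul a b : Cconj (Cmul a b) = Cmul (Cconj a) (Cconj b).
Proof. apply C_ext; simpl; ring. Qed.
Lemma Cconj_add a b : Cconj (Cadd a b) = Cadd (Cconj a) (Cconj b).
Proof. apply C_ext; simpl; ring. Qed.
Lemma Cconj_opp a : Cconj (Copp a) = Copp (Cconj a).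
Proof. apply C_ext; simpl; ring. Qed.
Lemma Cconj_sub a b : Cconj (Csub a b) = Csub (Cconj a) (Cconj b).
Proof. apply C_ext; simpl; ring. Qed.
Lemma Cconj_conj a : Cconj (Cconj a) = a.
Proof. apply C_ext; simpl; ring. Qed.
Lemma Cconj_0 : Cconj C0 = C0. Proof. apply C_ext; simpl; ring. Qed.
Lemma Cconj_1 : Cconj C1 = C1. Proof. apply C_ext; simpl; ring. Qed.
Lemma RtoC2 : RtoC 2 = Cadd C1 C1. Proof. apply C_ext; simpl; ring. Qed.
Lemma RtoCm1 : RtoC (-1) = Copp C1. Proof. apply C_ext; simpl; ring. Qed.
Lemma RtoCm2 : RtoC (-2) = Copp (Cadd C1 C1). Proof. apply C_ext; simpl; ring. Qed.

Lemma csum_ext n f g : (forall k, (k < n)%nat -> f k = g k) -> csum n f = csum n g.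
Proof. induction n; simpl; intros; [reflexivity|]. rewrite IHn, H; [reflexivity|lia|intros; apply H; lia]. Qed.
Lemma csum_add n f g : csum n (fun k => Cadd (f k) (g k)) = Cadd (csum n f) (csum n g).
Proof. induction n; simpl; [apply C_ext; simpl; ring|]. rewrite IHn. ring. Qed.
Lemma csum_mul_l n c f : csum n (fun k => Cmul c (f k)) = Cmul c (csum n f).
Proof. induction n; simpl; [apply C_ext; simpl; ring|]. rewrite IHn. ring. Qed.
Lemma csum_mul_r n c f : csum n (fun k => Cmul (f k) c) = Cmul (csum n f) c.
Proof. induction n; simpl; [apply C_ext; simpl; ring|]. rewrite IHn. ring. Qed.
Lemma csum_opp n f : csum n (fun k => Copp (f k)) = Copp (csum n f).
Proof. induction n; simpl; [apply C_ext; simpl; ring|]. rewrite IHn. ring. Qed.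
Lemma csum_zero n : csum n (fun _ => C0) = C0.
Proof. induction n; simpl; [reflexivity|]. rewrite IHn. ring. Qed.
Lemma csum_conj n f : Cconj (csum n f) = csum n (fun k => Cconj (f k)).
Proof. induction n; simpl; [apply Cconj_0|]. rewrite Cconj_add, IHn. reflexivity. Qed.
Lemma csum_swap n m f :
  csum n (fun k => csum m (fun l => f k l)) = csum m (fun l => csum n (fun k => f k l)).
Proof.
  induction n; simpl.
  - rewrite csum_zero. reflexivity.
  - rewrite IHn, <- csum_add. reflexivity.
Qed.
Lemma csum_single n i f : (i < n)%nat -> (forall k, (k < n)%nat -> k <> i -> f k = C0) ->
  csum n f = f i.
Proof.
  induction n; intros Hi Hf; [lia|]. simpl.
  destruct (Nat.eq_dec i n) as [->|Hne].
  - rewrite (csum_ext n f (fun _ => C0)), csum_zero by (intros; apply Hf; lia). ring.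
  - rewrite IHn; [| lia | intros; apply Hf; lia]. rewrite (Hf n) by lia. ring.
Qed.
Lemma csum_delta n i f : (i < n)%nat -> csum n (fun k => Cmul (mid i k) (f k)) = f i.
Proof.
  intros Hi. rewrite (csum_single n i); [| exact Hi | intros k _ Hk; unfold mid;
     destruct (Nat.eqb_spec i k); [congruence| ring]].
  unfold mid. rewrite Nat.eqb_refl. ring.
Qed.
Lemma csum_delta_r n i f : (i < n)%nat -> csum n (fun k => Cmul (f k) (mid k i)) = f i.
Proof.
  intros Hi. rewrite (csum_single n i); [| exact Hi | intros k _ Hk; unfold mid;
     destruct (Nat.eqb_spec k i); [congruence| ring]].
  unfold mid. rewrite Nat.eqb_refl. ring.
Qed.

Lemma meq_refl n A : meq n A A. Proof. intros i j _ _; reflexivity. Qed.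
Lemma meq_sym n A B : meq n A B -> meq n B A. Proof. intros H i j Hi Hj; symmetry; auto. Qed.
Lemma meq_trans n A B D : meq n A B -> meq n B D -> meq n A D.
Proof. intros H1 H2 i j Hi Hj; rewrite H1, H2; auto. Qed.
#[global] Instance meq_Equiv n : Equivalence (meq n).
Proof. split; [intro; apply meq_refl| intros ? ?; apply meq_sym| intros ? ? ?; apply meq_trans]. Qed.

#[global] Instance madd_Proper n : Proper (meq n ==> meq n ==> meq n) madd.
Proof. intros A A' HA B B' HB i j Hi Hj; unfold madd; rewrite HA, HB; auto. Qed.
#[global] Instance msub_Proper n : Proper (meq n ==> meq n ==> meq n) msub.
Proof. intros A A' HA B B' HB i j Hi Hj; unfold msub; rewrite HA, HB; auto. Qed.
#[global] Instance mscal_Proper n : Proper (eq ==> meq n ==> meq n) mscal.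
Proof. intros c c' -> A A' HA i j Hi Hj; unfold mscal; rewrite HA; auto. Qed.
#[global] Instance adj_Proper n : Proper (meq n ==> meq n) adj.
Proof. intros A A' HA i j Hi Hj; unfold adj; rewrite HA; auto. Qed.
#[global] Instance mmul_Proper n : Proper (meq n ==> meq n ==> meq n) (mmul n).
Proof.
  intros A A' HA B B' HB i j Hi Hj; unfold mmul; apply csum_ext; intros k Hk.
  rewrite HA, HB; auto.
Qed.
#[global] Instance mtrace_Proper n : Proper (meq n ==> eq) (mtrace n).
Proof. intros A A' HA; unfold mtrace; apply csum_ext; intros k Hk; rewrite HA; auto. Qed.

Lemma mmul_assoc n A B D : mmul n (mmul n A B) D = mmul n A (mmul n B D).
Proof.
  apply functional_extensionality; intro i; apply functional_extensionality; intro j.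
  unfold mmul.
  rewrite (csum_ext n _ (fun k => csum n (fun l => Cmul (A i l) (Cmul (B l k) (D k j))))).
  2:{ intros k _. rewrite <- csum_mul_r. apply csum_ext; intros; ring. }
  rewrite csum_swap. apply csum_ext; intros l _. rewrite <- csum_mul_l. reflexivity.
Qed.
Lemma mmul_madd_l n A B D : mmul n (madd A B) D = madd (mmul n A D) (mmul n B D).
Proof.
  apply functional_extensionality; intro i; apply functional_extensionality; intro j.
  unfold mmul, madd. rewrite <- csum_add. apply csum_ext; intros; ring.
Qed.
Lemma mmul_madd_r n A B D : mmul n D (madd A B) = madd (mmul n D A) (mmul n D B).
Proof.
  apply functional_extensionality; intro i; apply functional_extensionality; intro j.
  unfold mmul, madd. rewrite <- csum_add. apply csum_ext; intros; ring.
Qed.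
Lemma mmul_mscal_l n c A B : mmul n (mscal c A) B = mscal c (mmul n A B).
Proof.
  apply functional_extensionality; intro i; apply functional_extensionality; intro j.
  unfold mmul, mscal. rewrite <- csum_mul_l. apply csum_ext; intros; ring.
Qed.
Lemma mmul_mscal_r n c A B : mmul n B (mscal c A) = mscal c (mmul n B A).
Proof.
  apply functional_extensionality; intro i; apply functional_extensionality; intro j.
  unfold mmul, mscal. rewrite <- csum_mul_l. apply csum_ext; intros; ring.
Qed.
Lemma mmul_zero_l n A : mmul n mzero A = mzero.
Proof.
  apply functional_extensionality; intro i; apply functional_extensionality; intro j.
  unfold mmul, mzero. transitivity (csum n (fun _ => C0)); [apply csum_ext; intros; ring| apply csum_zero].
Qed.
Lemma msub_madd A B : msub A B = madd A (mscal (Copp C1) B).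
Proof.
  apply functional_extensionality; intro i; apply functional_extensionality; intro j.
  unfold msub, madd, mscal. ring.
Qed.
Lemma mscal_mscal c d A : mscal c (mscal d A) = mscal (Cmul c d) A.
Proof.
  apply functional_extensionality; intro i; apply functional_extensionality; intro j.
  unfold mscal. ring.
Qed.
Lemma adj_mmul n A B : adj (mmul n A B) = mmul n (adj B) (adj A).
Proof.
  apply functional_extensionality; intro i; apply functional_extensionality; intro j.
  unfold adj, mmul. rewrite csum_conj. apply csum_ext; intros. rewrite Cconj_mul; ring.
Qed.
Lemma adj_madd A B : adj (madd A B) = madd (adj A) (adj B).
Proof.
  apply functional_extensionality; intro i; apply functional_extensionality; intro j.
  unfold adj, madd. apply Cconj_add.
Qed.
Lemma adj_msub A B : adj (msub A B) = msub (adj A) (adj B).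
Proof.
  apply functional_extensionality; intro i; apply functional_extensionality; intro j.
  unfold adj, msub. apply Cconj_sub.
Qed.
Lemma adj_mscal c A : adj (mscal c A) = mscal (Cconj c) (adj A).
Proof.
  apply functional_extensionality; intro i; apply functional_extensionality; intro j.
  unfold adj, mscal. apply Cconj_mul.
Qed.
Lemma adj_adj A : adj (adj A) = A.
Proof.
  apply functional_extensionality; intro i; apply functional_extensionality; intro j.
  unfold adj. apply Cconj_conj.
Qed.
Lemma adj_mid : adj mid = mid.
Proof.
  apply functional_extensionality; intro i; apply functional_extensionality; intro j.
  unfold adj, mid. rewrite Nat.eqb_sym. destruct (Nat.eqb i j); [apply Cconj_1|apply Cconj_0].
Qed.
Lemma adj_rho psi : adj (rho0 psi) = rho0 psi.
Proof.
  apply functional_extensionality; intro i; apply functional_extensionality; intro j.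
  unfold adj, rho0, outer. rewrite Cconj_mul, Cconj_conj. ring.
Qed.
Lemma Cconj_RtoC r : Cconj (RtoC r) = RtoC r.
Proof. apply C_ext; simpl; ring. Qed.
Lemma adj_refl0 psi : adj (refl0 psi) = refl0 psi.
Proof. unfold refl0. rewrite adj_msub, adj_mscal, adj_mid, adj_rho, Cconj_RtoC. reflexivity. Qed.

Lemma mmul_mid_l n A : meq n (mmul n mid A) A.
Proof. intros i j Hi Hj. unfold mmul. apply (csum_delta n i (fun k => A k j)); auto. Qed.
Lemma mmul_mid_r n A : meq n (mmul n A mid) A.
Proof. intros i j Hi Hj. unfold mmul. apply (csum_delta_r n j (fun k => A i k)); auto. Qed.

Lemma rho_idem n psi : unit_vec n psi -> meq n (mmul n (rho0 psi) (rho0 psi)) (rho0 psi).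
Proof.
  intros Hu i j Hi Hj. unfold mmul, rho0, outer.
  rewrite (csum_ext n _ (fun k => Cmul (Cmul (psi i) (Cconj (psi j))) (Cmul (Cconj (psi k)) (psi k)))).
  2:{ intros; ring. }
  rewrite csum_mul_l. unfold unit_vec, vdot in Hu. rewrite Hu. ring.
Qed.
Lemma rho_idem_r n psi A : unit_vec n psi ->
  meq n (mmul n (rho0 psi) (mmul n (rho0 psi) A)) (mmul n (rho0 psi) A).
Proof. intros Hu. rewrite <- mmul_assoc, rho_idem by exact Hu. reflexivity. Qed.

Lemma dpl_eq f x l l' : derivable_pt_lim f x l -> l = l' -> derivable_pt_lim f x l'.
Proof. intros H ->; exact H. Qed.

Lemma cderiv_const c t : cderiv (fun _ => c) C0 t.
Proof. split; simpl; apply derivable_pt_lim_const. Qed.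
Lemma cderiv_add f g a b t : cderiv f a t -> cderiv g b t ->
  cderiv (fun s => Cadd (f s) (g s)) (Cadd a b) t.
Proof.
  intros [H1 H2] [H3 H4]; split; simpl.
  - exact (derivable_pt_lim_plus _ _ _ _ _ H1 H3).
  - exact (derivable_pt_lim_plus _ _ _ _ _ H2 H4).
Qed.
Lemma cderiv_mul f g a b t : cderiv f a t -> cderiv g b t ->
  cderiv (fun s => Cmul (f s) (g s)) (Cadd (Cmul a (g t)) (Cmul (f t) b)) t.
Proof.
  intros [H1 H2] [H3 H4]; split.
  - eapply dpl_eq.
    + exact (derivable_pt_lim_minus _ _ _ _ _ (derivable_pt_lim_mult _ _ _ _ _ H1 H3)
                                            (derivable_pt_lim_mult _ _ _ _ _ H2 H4)).
    + simpl; ring.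
  - eapply dpl_eq.
    + exact (derivable_pt_lim_plus _ _ _ _ _ (derivable_pt_lim_mult _ _ _ _ _ H1 H4)
                                            (derivable_pt_lim_mult _ _ _ _ _ H2 H3)).
    + simpl; ring.
Qed.
Lemma cderiv_conj f a t : cderiv f a t -> cderiv (fun s => Cconj (f s)) (Cconj a) t.
Proof.
  intros [H1 H2]; split; simpl.
  - exact H1.
  - exact (derivable_pt_lim_opp _ _ _ H2).
Qed.
Lemma cderiv_csum n (F : R -> nat -> C) (G : nat -> C) t :
  (forall k, (k < n)%nat -> cderiv (fun s => F s k) (G k) t) ->
  cderiv (fun s => csum n (F s)) (csum n G) t.
Proof.
  induction n; intros H; simpl.
  - apply cderiv_const.
  - apply cderiv_add; [apply IHn; intros; apply H; lia| apply H; lia].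
Qed.
Lemma cderiv_eq f a b t : cderiv f a t -> a = b -> cderiv f b t.
Proof. intros H ->; exact H. Qed.

Lemma mderiv_mmul n A B A' B' t : mderiv n A A' t -> mderiv n B B' t ->
  mderiv n (fun s => mmul n (A s) (B s)) (madd (mmul n A' (B t)) (mmul n (A t) B')) t.
Proof.
  intros HA HB i j Hi Hj. unfold mmul, madd. rewrite <- csum_add.
  apply (cderiv_csum n (fun s k => Cmul (A s i k) (B s k j))).
  intros k Hk. apply cderiv_mul; [apply HA| apply HB]; auto.
Qed.
Lemma mderiv_adj n A A' t : mderiv n A A' t -> mderiv n (fun s => adj (A s)) (adj A') t.
Proof. intros HA i j Hi Hj. unfold adj. apply (cderiv_conj (fun s => A s j i)); auto. Qed.
Lemma mderiv_const n M t : mderiv n (fun _ => M) mzero t.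
Proof. intros i j _ _. apply cderiv_const. Qed.
Lemma mderiv_meq n A D D' t : mderiv n A D t -> meq n D D' -> mderiv n A D' t.
Proof. intros H E i j Hi Hj. rewrite <- E by auto. auto. Qed.

Lemma key_comm n psi K : unit_vec n psi ->
  meq n (mmul n (acomm n (refl0 psi) K) (rho0 psi))
        (mmul n (rho0 psi) (acomm n (refl0 psi) K)).
Proof.
  intros Hu. unfold acomm, refl0. rewrite !msub_madd.
  rewrite ?mmul_madd_l, ?mmul_madd_r, ?mmul_mscal_l, ?mmul_mscal_r, ?mmul_madd_l, ?mmul_madd_r,
    ?mmul_mscal_l, ?mmul_mscal_r, ?mmul_assoc.
  rewrite ?mmul_mid_l, ?mmul_mid_r, ?rho_idem by exact Hu.
  rewrite ?rho_idem_r by exact Hu.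
  rewrite ?mmul_mid_l, ?mmul_mid_r.
  intros i j _ _. unfold madd, mscal. rewrite RtoC2. ring.
Qed.

Lemma mvmul_mmul n A B v : mvmul n (mmul n A B) v = mvmul n A (mvmul n B v).
Proof.
  apply functional_extensionality; intro i. unfold mvmul, mmul.
  rewrite (csum_ext n _ (fun k => csum n (fun l => Cmul (A i l) (Cmul (B l k) (v k))))).
  2:{ intros k _. rewrite <- csum_mul_r. apply csum_ext; intros; ring. }
  rewrite csum_swap. apply csum_ext; intros l _. rewrite <- csum_mul_l. reflexivity.
Qed.
Lemma mvmul_madd n A B v i : mvmul n (madd A B) v i = Cadd (mvmul n A v i) (mvmul n B v i).
Proof. unfold mvmul, madd. rewrite <- csum_add. apply csum_ext; intros; ring. Qed.
Lemma mvmul_mscal n c A v i : mvmul n (mscal c A) v i = Cmul c (mvmul n A v i).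
Proof. unfold mvmul, mscal. rewrite <- csum_mul_l. apply csum_ext; intros; ring. Qed.
Lemma mvmul_vext n A v w i : (forall k, (k < n)%nat -> v k = w k) -> mvmul n A v i = mvmul n A w i.
Proof. intros H. unfold mvmul. apply csum_ext; intros; rewrite H; auto. Qed.
Lemma mvmul_meq n A B v i : meq n A B -> (i < n)%nat -> mvmul n A v i = mvmul n B v i.
Proof. intros H Hi. unfold mvmul. apply csum_ext; intros; rewrite H; auto. Qed.
Lemma mvmul_mid n v i : (i < n)%nat -> mvmul n mid v i = v i.
Proof. intros Hi. unfold mvmul. apply csum_delta; auto. Qed.
Lemma mvmul_vlin n A a b v w i :
  mvmul n A (fun k => Cadd (Cmul a (v k)) (Cmul b (w k))) i
  = Cadd (Cmul a (mvmul n A v i)) (Cmul b (mvmul n A w i)).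
Proof.
  unfold mvmul. rewrite <- !csum_mul_l, <- csum_add. apply csum_ext; intros; ring.
Qed.
Lemma mvmul_refl0 n psi w k : (k < n)%nat ->
  mvmul n (refl0 psi) w k = Csub (w k) (Cmul (RtoC 2) (Cmul (psi k) (vdot n psi w))).
Proof.
  intros Hk. unfold mvmul, refl0, msub, mscal, rho0, outer, vdot.
  transitivity (csum n (fun l => Cadd (Cmul (mid k l) (w l))
       (Cmul (Copp (Cmul (RtoC 2) (psi k))) (Cmul (Cconj (psi l)) (w l))))).
  { apply csum_ext; intros; ring. }
  rewrite csum_add, csum_mul_l, (csum_delta n k w) by exact Hk. ring.
Qed.
Lemma Apsi n psi K k : unit_vec n psi -> (k < n)%nat ->
  mvmul n (acomm n (refl0 psi) K) psi k
  = Cmul (Cmul (RtoC (-2)) (vdot n psi (mvmul n K psi))) (psi k).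
Proof.
  intros Hu Hk. unfold acomm. rewrite mvmul_madd, !mvmul_mmul.
  rewrite (mvmul_vext n K (mvmul n (refl0 psi) psi) (fun l => Cadd (Cmul (Copp C1) (psi l)) (Cmul C0 (psi l)))).
  2:{ intros l Hl. rewrite mvmul_refl0 by exact Hl. unfold unit_vec in Hu. rewrite Hu, RtoC2. ring. }
  rewrite mvmul_vlin, mvmul_refl0 by exact Hk. rewrite RtoC2, RtoCm2. ring.
Qed.

Lemma vdot_skew n psi K : skew_hermitian n K -> Re (vdot n psi (mvmul n K psi)) = 0.
Proof.
  intros HK.
  assert (E: Cconj (vdot n psi (mvmul n K psi)) = Copp (vdot n psi (mvmul n K psi))).
  { unfold vdot, mvmul.
    transitivity (csum n (fun k => csum n (fun l => Cmul (psi k) (Cmul (Copp (K l k)) (Cconj (psi l)))))).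
    { rewrite csum_conj. apply csum_ext; intros k Hk.
      rewrite Cconj_mul, Cconj_conj, csum_conj, <- csum_mul_l. apply csum_ext; intros l Hl.
      rewrite Cconj_mul.
      assert (Hs := HK l k Hl Hk). unfold adj, mscal in Hs. rewrite Hs, RtoCm1. ring. }
    transitivity (Copp (csum n (fun l => csum n (fun k => Cmul (Cconj (psi l)) (Cmul (K l k) (psi k)))))).
    { rewrite <- csum_swap, <- csum_opp. apply csum_ext; intros k _. rewrite <- csum_opp.
      apply csum_ext; intros; ring. }
    f_equal. apply csum_ext; intros l _. rewrite <- csum_mul_l. apply csum_ext; intros; ring. }
  revert E. generalize (vdot n psi (mvmul n K psi)). intros c E.
  assert (E2 := f_equal Re E). destruct c; simpl in E2 |- *. lra.
Qed.

Lemma madd_zero_l A : madd mzero A = A.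
Proof.
  apply functional_extensionality; intro i; apply functional_extensionality; intro j.
  unfold madd, mzero. ring.
Qed.
Lemma mtrace_madd n A B : mtrace n (madd A B) = Cadd (mtrace n A) (mtrace n B).
Proof. unfold mtrace, madd. apply csum_add. Qed.
Lemma mtrace_mscal n c A : mtrace n (mscal c A) = Cmul c (mtrace n A).
Proof. unfold mtrace, mscal. apply csum_mul_l. Qed.
Lemma mtrace_comm n X Y : mtrace n (mmul n X Y) = mtrace n (mmul n Y X).
Proof.
  unfold mtrace, mmul. rewrite csum_swap. apply csum_ext; intros; apply csum_ext; intros; ring.
Qed.
Lemma adj_HH n H U : hermitian n H -> meq n (adj (HH n H U)) (HH n H U).
Proof.
  intros HH0. unfold HH. rewrite !adj_mmul, adj_adj. unfold hermitian in HH0. rewrite HH0.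
  rewrite mmul_assoc. reflexivity.
Qed.

Theorem mainTheorem7 (n : nat) (H : Mat) (hbar : R) (psi0 : Vec)
  (kappa : R -> Mat) (U : R -> Mat) :
  hermitian n H ->
  0 < hbar ->
  unit_vec n psi0 ->
  smooth_curve n kappa ->
  (forall t, skew_hermitian n (kappa t)) ->
  (forall t, unitary n (U t)) ->
  (forall t, mderiv n U (mmul n (U t) (xiH n hbar H psi0 (kappa t) (U t))) t) ->
  (* (i) *)
  (forall t, meq n
     (comm n (msub (mscal (Cmul Ci (RtoC hbar)) (xiH n hbar H psi0 (kappa t) (U t)))
                   (HH n H (U t)))
             (rho0 psi0))
     mzero)
  /\
  (* (ii) *)
  (forall t,
     mderiv n (fun s => HH n H (U s))
       (comm n (HH n H (U t)) (acomm n (refl0 psi0) (kappa t))) t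
     /\ mtrace n (mmul n (rho0 psi0)
                   (comm n (HH n H (U t)) (acomm n (refl0 psi0) (kappa t)))) = C0)
  /\
  (* (iii) *)
  (exists psidot : R -> Vec,
     forall t,
       vderiv n (fun s => mvmul n (U s) psi0) (psidot t) t
       /\ veq n (fun i => Cmul (Cmul Ci (RtoC hbar)) (psidot t i))
                (fun i => Cadd (mvmul n H (mvmul n (U t) psi0) i)
                               (Cmul (alpha n hbar psi0 (kappa t)) (mvmul n (U t) psi0 i)))
       /\ Im (alpha n hbar psi0 (kappa t)) = 0).
Proof.
  intros HH0 Hh Hu Hsm Hsk Hun Hder.
  assert (Hkc : Cmul (Cmul Ci (RtoC hbar)) (Cmul (Copp Ci) (RtoC (/ hbar))) = C1).
  { apply C_ext; simpl; field; lra. }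
  assert (Hcc : Cconj (Cmul (Copp Ci) (RtoC (/ hbar))) = Copp (Cmul (Copp Ci) (RtoC (/ hbar)))).
  { apply C_ext; simpl; ring. }
  split; [|split].
  -
    intro t.
    assert (EX : msub (mscal (Cmul Ci (RtoC hbar)) (xiH n hbar H psi0 (kappa t) (U t)))
                      (HH n H (U t))
                 = mscal (Cmul Ci (RtoC hbar)) (acomm n (refl0 psi0) (kappa t))).
    { apply functional_extensionality; intro i; apply functional_extensionality; intro j.
      unfold xiH, msub, mscal, madd.
      transitivity (Cadd (Csub (Cmul (Cmul (Cmul Ci (RtoC hbar)) (Cmul (Copp Ci) (RtoC (/ hbar))))
                                     (HH n H (U t) i j)) (HH n H (U t) i j))
                         (Cmul (Cmul Ci (RtoC hbar)) (acomm n (refl0 psi0) (kappa t) i j))).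
      { ring. }
      rewrite Hkc. ring. }
    rewrite EX. unfold comm. rewrite mmul_mscal_l, mmul_mscal_r.
    rewrite (key_comm n psi0 (kappa t) Hu).
    intros i j _ _. unfold msub, mscal, mzero. ring.
  - intro t. split.
    + change (mderiv n (fun s => mmul n (adj (U s)) (mmul n H (U s)))
                (comm n (HH n H (U t)) (acomm n (refl0 psi0) (kappa t))) t).
      eapply mderiv_meq.
      { apply (mderiv_mmul n (fun s => adj (U s)) (fun s => mmul n H (U s))).
        - apply (mderiv_adj n U). apply Hder.
        - apply (mderiv_mmul n (fun _ => H) U). apply mderiv_const. apply Hder. }
      rewrite mmul_zero_l, madd_zero_l, adj_mmul, mmul_assoc.
      assert (E2 : mmul n (adj (U t)) (mmul n H (mmul n (U t) (xiH n hbar H psi0 (kappa t) (U t))))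
                   = mmul n (HH n H (U t)) (xiH n hbar H psi0 (kappa t) (U t))).
      { unfold HH. rewrite !mmul_assoc. reflexivity. }
      rewrite E2.
      change (mmul n (adj (U t)) (mmul n H (U t))) with (HH n H (U t)).
      assert (EA : meq n (adj (acomm n (refl0 psi0) (kappa t)))
                         (mscal (Copp C1) (acomm n (refl0 psi0) (kappa t)))).
      { unfold acomm. rewrite adj_madd, !adj_mmul, adj_refl0.
        unfold skew_hermitian in Hsk. rewrite (Hsk t).
        rewrite mmul_mscal_l, mmul_mscal_r, RtoCm1.
        intros i j _ _. unfold madd, mscal. ring. }
      unfold xiH at 1. rewrite adj_madd, adj_mscal, Hcc, adj_HH by exact HH0.
      rewrite EA. unfold xiH, comm. rewrite msub_madd.
      rewrite ?mmul_madd_l, ?mmul_madd_r, ?mmul_mscal_l, ?mmul_mscal_r.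
      intros i j _ _. unfold madd, mscal. ring.
    + unfold comm. rewrite msub_madd, mmul_madd_r, mmul_mscal_r, mtrace_madd, mtrace_mscal.
      assert (T : mtrace n (mmul n (rho0 psi0) (mmul n (HH n H (U t)) (acomm n (refl0 psi0) (kappa t))))
                = mtrace n (mmul n (rho0 psi0) (mmul n (acomm n (refl0 psi0) (kappa t)) (HH n H (U t))))).
      { rewrite <- mmul_assoc, mtrace_comm, <- mmul_assoc.
        rewrite (key_comm n psi0 (kappa t) Hu). rewrite mmul_assoc. reflexivity. }
      rewrite T. ring.
  - exists (fun t => mvmul n (mmul n (U t) (xiH n hbar H psi0 (kappa t) (U t))) psi0).
    intro t. split; [|split].
    + intros i Hi. unfold mvmul.
      apply (cderiv_csum n (fun s k => Cmul (U s i k) (psi0 k))).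
      intros k Hk. eapply cderiv_eq.
      { apply (cderiv_mul (fun s => U s i k) (fun _ => psi0 k)).
        - apply Hder; auto.
        - apply cderiv_const. }
      ring.
    + intros i Hi. cbv beta. rewrite mvmul_mmul.
      rewrite (mvmul_vext n (U t) (mvmul n (xiH n hbar H psi0 (kappa t) (U t)) psi0)
         (fun l => Cadd (Cmul (Cmul (Copp Ci) (RtoC (/ hbar))) (mvmul n (HH n H (U t)) psi0 l))
                        (Cmul (Cmul (RtoC (-2)) (vdot n psi0 (mvmul n (kappa t) psi0))) (psi0 l)))).
      2:{ intros l Hl. unfold xiH. rewrite mvmul_madd, mvmul_mscal, Apsi by assumption.
          reflexivity. }
      rewrite mvmul_vlin.
      assert (E : mvmul n (U t) (mvmul n (HH n H (U t)) psi0) i = mvmul n H (mvmul n (U t) psi0) i).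
      { unfold HH. rewrite !mvmul_mmul. rewrite <- (mvmul_mmul n (U t) (adj (U t))).
        rewrite (mvmul_meq n (mmul n (U t) (adj (U t))) mid) by (try apply (Hun t); exact Hi).
        apply mvmul_mid; exact Hi. }
      rewrite E. unfold alpha.
      transitivity (Cadd (Cmul (Cmul (Cmul Ci (RtoC hbar)) (Cmul (Copp Ci) (RtoC (/ hbar))))
                            (mvmul n H (mvmul n (U t) psi0) i))
                         (Cmul (Cmul Ci (RtoC hbar))
                            (Cmul (Cmul (RtoC (-2)) (vdot n psi0 (mvmul n (kappa t) psi0)))
                                  (mvmul n (U t) psi0 i)))).
      { ring. }
      rewrite Hkc. ring.
    + unfold alpha. assert (Hre := vdot_skew n psi0 (kappa t) (Hsk t)).
      revert Hre. generalize (vdot n psi0 (mvmul n (kappa t) psi0)). intros c Hre.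
      destruct c as [cr ci]. simpl in Hre. subst cr. simpl. ring.
Qed.
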